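(* Let $R$ be a ring, $*\in\{l,r,\emptyset\}$, $\mathfrak{a}\in\mathrm{ass}\,\mathbb{L}_*(R)$, and $\pi:R\to\overline{R}:=R/\mathfrak{a}$, $r\mapsto\overline{r}=r+\mathfrak{a}$. Then \begin{enumerate} \item $T_{*,\mathfrak{a}}(R)=\pi^{-1}(S_*(\overline{R}))$; \item $\mathbb{Q}_{*,\mathfrak{a}}(R)\simeq Q_*(\overline{R})$, an $R$-isomorphism; \item $T_{*,\mathfrak{a}}(R)=\sigma^{-1}(\mathbb{Q}_{*,\mathfrak{a}}(R)^\times)=\sigma^{-1}(Q_*(\overline{R})^\times)$, where $\sigma:R\to\mathbb{Q}_{*,\mathfrak{a}}(R)\simeq Q_*(\overline{R})$, $r\mapsto\frac r1$. \end{enumerate}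
   Context: Rings are associative with $1$. Multiplicative set: $SS\subseteq S$, $1\in S$, $0\notin S$. $R\langle S^{-1}\rangle=R\langle X_S\rangle/I_S$ ($R\langle X_S\rangle$ freely generated by $R$ and noncommuting $x_s$, $s\in S$; $I_S$ generated by $sx_s-1,x_ss-1$); $\mathrm{ass}_R(S)=\ker(R\to R\langle S^{-1}\rangle)$. $S$ is left (resp. right) localizable if $R\langle S^{-1}\rangle\ne0$ and every element has the form $(x_s+I_S)(r+I_S)$ (resp. $(r+I_S)(x_s+I_S)$); localizable if both; $\mathbb{L}_*(R)$ is the set of $*$-localizable sets ($l$: left, $r$: right, $\emptyset$: both), $\mathbb{L}_*(R,\mathfrak{a})=\{S\in\mathbb{L}_*(R):\mathrm{ass}_R(S)=\mathfrak{a}\}$ and $\mathrm{ass}\,\mathbb{L}_*(R)=\{\mathrm{ass}_R(S):S\in\mathbb{L}_*(R)\}$. $T_{*,\mathfrak{a}}(R):=\bigcup_{S\in\mathbb{L}_*(R,\mathfrak{a})}S$; it is the largest element of $\mathbb{L}_*(R,\mathfrak{a})$, and $\mathbb{Q}_{*,\mathfrak{a}}(R):=R\langle T_{*,\mathfrak{a}}(R)^{-1}\rangle$. For a ring $A$, a regular left (right) Ore set is a multiplicative set $T$ of regular elements with $Ta\cap At\ne\emptyset$ (resp. $aT\cap tA\neq\emptyset$) for all $a\in A,t\in T$; there is a largest regular left Ore set $S_l(A)$, a largest regular right Ore set $S_r(A)$ and a largest regular (two-sided) Ore set $S_\emptyset(A)=S(A)$; $Q_l(A)=S_l(A)^{-1}A$,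 $Q_r(A)=AS_r(A)^{-1}$, $Q_\emptyset(A)=S(A)^{-1}A$. $Q^\times$ is the unit group. *)

(* Defs.v *)
From HB Require Import structures.
From mathcomp Require Import all_boot all_algebra.
Set Implicit Arguments. Unset Strict Implicit. Unset Printing Implicit Defensive.
Import GRing.Theory.
Local Open Scope ring_scope.

(* two-sided unit (no unitRing structure is assumed) *)
Definition is_unit (A : nzRingType) (x : A) : Prop :=
  exists y : A, x * y = 1 /\ y * x = 1.

Definition mult_set (R : nzRingType) (S : R -> Prop) : Prop :=
  S 1 /\ ~ S 0 /\ (forall x y, S x -> S y -> S (x * y)).

Definition inverts (R A : nzRingType) (S : R -> Prop) (f : R -> A) : Prop :=
  forall s, S s -> is_unit (f s).

(* sigma : R -> A is (the canonical map into) R<S^{-1}>, characterised by its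
   universal property among (nonzero) rings; A is nonzero since nzRingType. *)
Definition univ_loc (R : nzRingType) (S : R -> Prop) (A : nzRingType)
    (sigma : {rmorphism R -> A}) : Prop :=
  inverts S sigma /\
  forall (B : nzRingType) (g : {rmorphism R -> B}), inverts S g ->
    exists h : {rmorphism A -> B},
      (forall r, h (sigma r) = g r) /\
      (forall h' : {rmorphism A -> B}, (forall r, h' (sigma r) = g r) ->
         forall x, h' x = h x).

(* ass_R(S) = ker (R -> R<S^{-1}>): the elements killed by every S-inverting
   ring morphism (= all of R when R<S^{-1}> = 0). *)
Definition ass (R : nzRingType) (S : R -> Prop) (r : R) : Prop :=
  forall (B : nzRingType) (g : {rmorphism R -> B}), inverts S g -> g r = 0.

Inductive side := Lside | Rside | Bside.

(* left localizable: R<S^{-1}> <> 0 and every element is s^{-1} r *)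
Definition left_loc (R : nzRingType) (S : R -> Prop) : Prop :=
  exists (A : nzRingType) (sigma : {rmorphism R -> A}), univ_loc S sigma /\
    forall q : A, exists s r, S s /\ sigma s * q = sigma r.

Definition right_loc (R : nzRingType) (S : R -> Prop) : Prop :=
  exists (A : nzRingType) (sigma : {rmorphism R -> A}), univ_loc S sigma /\
    forall q : A, exists s r, S s /\ q * sigma s = sigma r.

Definition localizable (R : nzRingType) (st : side) (S : R -> Prop) : Prop :=
  mult_set S /\
  match st with
  | Lside => left_loc S
  | Rside => right_loc S
  | Bside => left_loc S /\ right_loc S
  end.

Definition loc_ass (R : nzRingType) (st : side) (a : R -> Prop) (S : R -> Prop) : Prop :=
  localizable st S /\ (forall r, ass S r <-> a r).

Definition in_ass_L (R : nzRingType) (st : side) (a : R -> Prop) : Prop :=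
  exists S, loc_ass st a S.

Definition Tmax (R : nzRingType) (st : side) (a : R -> Prop) (r : R) : Prop :=
  exists S, loc_ass st a S /\ S r.

Definition regular (A : nzRingType) (x : A) : Prop :=
  (forall y, x * y = 0 -> y = 0) /\ (forall y, y * x = 0 -> y = 0).

Definition left_ore_cond (A : nzRingType) (T : A -> Prop) : Prop :=
  forall a t, T t -> exists t' a', T t' /\ t' * a = a' * t.

Definition right_ore_cond (A : nzRingType) (T : A -> Prop) : Prop :=
  forall a t, T t -> exists t' a', T t' /\ a * t' = t * a'.

Definition reg_ore_set (A : nzRingType) (st : side) (T : A -> Prop) : Prop :=
  mult_set T /\ (forall t, T t -> regular t) /\
  match st with
  | Lside => left_ore_cond T
  | Rside => right_ore_cond T
  | Bside => left_ore_cond T /\ right_ore_cond T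
  end.

(* S_*(A): the largest regular *-Ore set, i.e. the union of all of them *)
Definition Smax (A : nzRingType) (st : side) (x : A) : Prop :=
  exists T, reg_ore_set st T /\ T x.

(* phi : A -> Q is a ring of fractions of A w.r.t. T: T^{-1}A (left, used for
   * = l and * = empty) or A T^{-1} (right, used for * = r). *)
Definition frac_ring (A : nzRingType) (st : side) (T : A -> Prop) (Q : nzRingType)
    (phi : {rmorphism A -> Q}) : Prop :=
  inverts T phi /\
  match st with
  | Rside =>
      (forall q : Q, exists t a, T t /\ q * phi t = phi a) /\
      (forall a, phi a = 0 -> exists t, T t /\ a * t = 0)
  | _ =>
      (forall q : Q, exists t a, T t /\ phi t * q = phi a) /\
      (forall a, phi a = 0 -> exists t, T t /\ t * a = 0)
  end.

(* Main.v *)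
Require Import Defs.
From HB Require Import structures.
From mathcomp Require Import all_boot all_algebra.
From mathcomp Require Import boolp.
Import GRing.Theory.
Local Open Scope ring_scope.
Set Implicit Arguments. Unset Strict Implicit. Unset Printing Implicit Defensive.


Section OreLoc.
Variables (A : nzRingType) (T : A -> Prop) (HT : reg_ore_set Lside T).
Let HT1 : T 1 := proj1 (proj1 HT).
Let HTM : forall x y, T x -> T y -> T (x * y) := proj2 (proj2 (proj1 HT)).
Let HTreg : forall t, T t -> regular t := proj1 (proj2 HT).
Let HTore : left_ore_cond T := proj2 (proj2 HT).

Lemma rcancel t u u' : T t -> u * t = u' * t -> u = u'.
Proof.
move=> Tt e; apply/eqP; rewrite -subr_eq0; apply/eqP.
by apply: (proj2 (HTreg Tt)); rewrite mulrBl e subrr.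
Qed.

Lemma lcancel t u u' : T t -> t * u = t * u' -> u = u'.
Proof.
move=> Tt e; apply/eqP; rewrite -subr_eq0; apply/eqP.
by apply: (proj1 (HTreg Tt)); rewrite mulrBr e subrr.
Qed.

Record frac := Frac { fden : A; fnum : A; fdenT : T fden }.

Definition eqv (p q : frac) : Prop :=
  forall u u', u * fden p = u' * fden q -> u * fnum p = u' * fnum q.

Lemma eqv_refl p : eqv p p.
Proof. by move=> u u' /(rcancel (fdenT p)) ->. Qed.

Lemma eqv_sym p q : eqv p q -> eqv q p.
Proof. by move=> e u u' h; symmetry; apply: e. Qed.

Lemma eqv_trans p q r : eqv p q -> eqv q r -> eqv p r.
Proof.
move=> e1 e2 u u'' h.
have [ts [xs [Tts hs]]] := HTore (u * fden p) (fdenT q).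
apply: (lcancel Tts); rewrite !mulrA.
have -> : ts * u * fnum p = xs * fnum q.
  by apply: e1; rewrite -mulrA hs.
apply: e2; by rewrite -hs mulrA -!mulrA h.
Qed.

Definition Qt := {C : frac -> Prop | exists p, C = eqv p}.

Definition proj (p : frac) : Qt := exist _ (eqv p) (ex_intro _ p erefl).
Definition repr (x : Qt) : frac := projT1 (cid (proj2_sig x)).

Lemma proj_eq p q : proj p = proj q <-> eqv p q.
Proof.
split.
  move=> h; have h1 : eqv p = eqv q by move: h => [].
  by rewrite h1; apply: eqv_refl.
move=> e; apply: eq_exist; apply: funext => r; apply: propext; split.
  by move=> e'; apply: eqv_trans (eqv_sym e) e'.
by move=> e'; apply: eqv_trans e e'.
Qed.

Lemma reprK x : proj (repr x) = x.
Proof.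
rewrite /repr; case: (cid _) => p hp /=.
by case: x hp => C hC /= hp; apply: eq_exist; rewrite hp.
Qed.

Lemma repr_eqv p : eqv (repr (proj p)) p.
Proof. by apply/proj_eq; rewrite reprK. Qed.

Definition mkf (d n : A) : frac :=
  match pselect (T d) with left H => Frac n H | right _ => Frac 0 HT1 end.

Lemma mkf_den d n : T d -> fden (mkf d n) = d.
Proof. by rewrite /mkf; case: pselect. Qed.
Lemma mkf_num d n : T d -> fnum (mkf d n) = n.
Proof. by rewrite /mkf; case: pselect. Qed.

Definition Qf d n := proj (mkf d n).

Lemma QfP x : exists d n, T d /\ x = Qf d n.
Proof.
rewrite -(reprK x); case: (repr x) => d n Td; exists d, n; split => //.
apply/proj_eq => u u' h; rewrite mkf_num // ; rewrite mkf_den // in h.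
by rewrite (rcancel Td h).
Qed.

Lemma Qf_eq d n d' n' : T d -> T d' ->
  (Qf d n = Qf d' n' <-> forall u u', u * d = u' * d' -> u * n = u' * n').
Proof.
move=> Td Td'; rewrite /Qf proj_eq /eqv !mkf_den // !mkf_num //.
Qed.

Lemma Qf_same d n n' : T d -> (Qf d n = Qf d n' <-> n = n').
Proof.
move=> Td; rewrite Qf_eq //; split; last by move=> -> u u' /(rcancel Td) ->.
by move=> h; rewrite -[n]mul1r -[n']mul1r; apply: h.
Qed.

Lemma Qf_scale d n d' x : T d -> T d' -> d' = x * d -> Qf d' (x * n) = Qf d n.
Proof.
move=> Td Td' e; apply/Qf_eq => // u u'; rewrite e mulrA => /(rcancel Td) <-.
by rewrite mulrA.
Qed.

Definition oreP (a : A) (p : frac) := cid (HTore a (fdenT p)).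
Definition oret a p := projT1 (oreP a p).
Definition orea a p := projT1 (cid (projT2 (oreP a p))).
Lemma oreS a p : T (oret a p) /\ oret a p * a = orea a p * fden p.
Proof. rewrite /orea /oret; case: (oreP a p) => t h /=; case: (cid _) => x hx; exact: hx. Qed.

Definition fadd (p q : frac) : frac :=
  @Frac (oret (fden p) q * fden p)
        (oret (fden p) q * fnum p + orea (fden p) q * fnum q)
        (HTM (proj1 (oreS _ _)) (fdenT p)).

Definition fmul (p q : frac) : frac :=
  @Frac (oret (fnum p) q * fden p) (orea (fnum p) q * fnum q)
        (HTM (proj1 (oreS _ _)) (fdenT p)).

Definition fopp (p : frac) : frac := @Frac (fden p) (- fnum p) (fdenT p).

Lemma fadd_char p q p0 q0 d x y : eqv p p0 -> eqv q q0 -> T d ->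
  d = x * fden p0 -> d = y * fden q0 ->
  eqv (fadd p q) (mkf d (x * fnum p0 + y * fnum q0)).
Proof.
move=> e1 e2 Td h1 h2 w w'; rewrite mkf_den // mkf_num //= => h.
have [_ ho] := oreS (fden p) q.
rewrite mulrDr mulrDr !mulrA; congr (_ + _).
  by apply: e1; rewrite -!mulrA -h1 -h mulrA.
by apply: e2; rewrite -!mulrA -ho -h2 mulrA -h mulrA.
Qed.

Lemma fmul_char p q p0 q0 z y : eqv p p0 -> eqv q q0 -> T (z * fden p0) ->
  z * fnum p0 = y * fden q0 ->
  eqv (fmul p q) (mkf (z * fden p0) (y * fnum q0)).
Proof.
move=> e1 e2 Td h w w'; rewrite mkf_den // mkf_num //= => h'.
have [_ ho] := oreS (fnum p) q.
rewrite !mulrA; apply: e2; rewrite -!mulrA -ho -h mulrA.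
by rewrite [RHS]mulrA; apply: e1; rewrite -!mulrA.
Qed.

Definition Qadd x y := proj (fadd (repr x) (repr y)).
Definition Qmul x y := proj (fmul (repr x) (repr y)).
Definition Qopp x := proj (fopp (repr x)).
Definition Q0 := Qf 1 0.
Definition Q1 := Qf 1 1.

Lemma Qf_add d1 n1 d2 n2 d x y : T d1 -> T d2 -> T d ->
  d = x * d1 -> d = y * d2 -> Qadd (Qf d1 n1) (Qf d2 n2) = Qf d (x * n1 + y * n2).
Proof.
move=> T1 T2 Td h1 h2; apply/proj_eq.
have := @fadd_char (repr (Qf d1 n1)) (repr (Qf d2 n2)) (mkf d1 n1) (mkf d2 n2) d x y.
rewrite !mkf_den // !mkf_num //; by apply; try exact: repr_eqv.
Qed.

Lemma Qf_mul d1 n1 d2 n2 z y : T d1 -> T d2 -> T (z * d1) ->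
  z * n1 = y * d2 -> Qmul (Qf d1 n1) (Qf d2 n2) = Qf (z * d1) (y * n2).
Proof.
move=> T1 T2 Td h; apply/proj_eq.
have := @fmul_char (repr (Qf d1 n1)) (repr (Qf d2 n2)) (mkf d1 n1) (mkf d2 n2) z y.
rewrite !mkf_den // !mkf_num //; by apply; try exact: repr_eqv.
Qed.

Lemma Qf_opp d n : T d -> Qopp (Qf d n) = Qf d (- n).
Proof.
move=> Td; apply/proj_eq => u u' /=.
have e := @repr_eqv (mkf d n).
rewrite mkf_den // mkf_num // => h; rewrite !mulrN; congr (- _).
by have := e u u'; rewrite mkf_den // mkf_num //; apply.
Qed.

Lemma common2 d1 d2 : T d1 -> T d2 -> exists d x y, [/\ T d, d = x * d1 & d = y * d2].
Proof.
move=> T1 T2; have [u [v [Tu h]]] := HTore d1 T2.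
by exists (u * d1), u, v; split => //; apply: HTM.
Qed.

Lemma common3 d1 d2 d3 : T d1 -> T d2 -> T d3 ->
  exists d x y z, [/\ T d, d = x * d1, d = y * d2 & d = z * d3].
Proof.
move=> T1 T2 T3; have [e [x [y [Te h1 h2]]]] := common2 T1 T2.
have [u [v [Tu h]]] := HTore e T3.
exists (u * e), (u * x), (u * y), v; split; rewrite -?mulrA -?h1 -?h2 //.
exact: HTM.
Qed.

Lemma Q_ind2 (P : Qt -> Qt -> Prop) :
  (forall d a b, T d -> P (Qf d a) (Qf d b)) -> forall x y, P x y.
Proof.
move=> H x y; have [d1 [n1 [T1 ->]]] := QfP x; have [d2 [n2 [T2 ->]]] := QfP y.
have [d [u [v [Td h1 h2]]]] := common2 T1 T2.
by rewrite -(Qf_scale n1 T1 Td h1) -(Qf_scale n2 T2 Td h2); apply: H.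
Qed.

Lemma Q_ind3 (P : Qt -> Qt -> Qt -> Prop) :
  (forall d a b c, T d -> P (Qf d a) (Qf d b) (Qf d c)) -> forall x y z, P x y z.
Proof.
move=> H x y z; have [d1 [n1 [T1 ->]]] := QfP x; have [d2 [n2 [T2 ->]]] := QfP y.
have [d3 [n3 [T3 ->]]] := QfP z.
have [d [u [v [w [Td h1 h2 h3]]]]] := common3 T1 T2 T3.
rewrite -(Qf_scale n1 T1 Td h1) -(Qf_scale n2 T2 Td h2) -(Qf_scale n3 T3 Td h3).
exact: H.
Qed.

Lemma Qf_add_same d a b : T d -> Qadd (Qf d a) (Qf d b) = Qf d (a + b).
Proof. by move=> Td; rewrite (@Qf_add _ _ _ _ d 1 1) // ?mul1r. Qed.

Lemma Qf0 d : T d -> Qf d 0 = Q0.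
Proof. by move=> Td; rewrite /Q0 -(@Qf_scale 1 0 d d) ?mulr0 ?mulr1. Qed.

Lemma QaddA : associative Qadd.
Proof.
apply: Q_ind3 => d a b c Td.
by rewrite !Qf_add_same // addrA.
Qed.

Lemma QaddC : commutative Qadd.
Proof. by apply: Q_ind2 => d a b Td; rewrite !Qf_add_same // addrC. Qed.

Lemma Qadd0 : left_id Q0 Qadd.
Proof.
move=> x; have [d [n [Td ->]]] := QfP x.
by rewrite -(Qf0 Td) Qf_add_same // add0r.
Qed.

Lemma QaddN : left_inverse Q0 Qopp Qadd.
Proof.
move=> x; have [d [n [Td ->]]] := QfP x.
by rewrite Qf_opp // Qf_add_same // addNr Qf0.
Qed.

Lemma QmulA : associative Qmul.
Proof.
move=> x y w.
have [t [a [Tt ->]]] := QfP x; have [s [b [Ts ->]]] := QfP y.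
have [r [c [Tr ->]]] := QfP w.
have [z'' [y'' [Tz'' h1]]] := HTore b Tr.
have [z [y0 [Tz h2]]] := HTore a Ts.
have [z' [Y [Tz' h3]]] := HTore y0 Tz''.
have Tzt : T (z * t) by apply: HTM.
have Tzs : T (z'' * s) by apply: HTM.
rewrite (Qf_mul b Tt Ts Tzt h2).
have T3 : T (z' * (z * t)) by apply: HTM.
have e3 : z' * (y0 * b) = (Y * y'') * r by rewrite mulrA h3 -!mulrA h1.
rewrite (Qf_mul c Tzt Tr T3 e3).
rewrite (Qf_mul c Ts Tr Tzs h1).
have T4 : T ((z' * z) * t) by rewrite -mulrA.
have e4 : (z' * z) * a = Y * (z'' * s) by rewrite -mulrA h2 !mulrA h3.
rewrite (Qf_mul (y'' * c) Tt Tzs T4 e4).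
by rewrite !mulrA.
Qed.

Lemma Qmul1 : left_id Q1 Qmul.
Proof.
move=> x; have [s [b [Ts ->]]] := QfP x.
rewrite /Q1 (@Qf_mul _ _ _ _ s 1 HT1 Ts) ?mulr1 ?mul1r //.
Qed.

Lemma Qmulr1 : right_id Q1 Qmul.
Proof.
move=> x; have [t [a [Tt ->]]] := QfP x.
rewrite /Q1 (@Qf_mul _ _ _ _ 1 a Tt HT1) ?mulr1 ?mul1r //.
Qed.

Lemma QmulDl : left_distributive Qmul Qadd.
Proof.
apply: Q_ind2 => d a b Td w; have [r [c [Tr ->]]] := QfP w.
rewrite Qf_add_same //.
have [z1 [y1 [Tz1 h1]]] := HTore a Tr.
have [z2 [y2 [Tz2 h2]]] := HTore (z1 * b) Tr.
have TZ : T (z2 * z1 * d) by apply: HTM => //; apply: HTM.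
have e1 : (z2 * z1) * (a + b) = (z2 * y1 + y2) * r.
  by rewrite mulrDr mulrDl -!mulrA h1 -h2 mulrA.
have e2 : (z2 * z1) * a = (z2 * y1) * r by rewrite -!mulrA h1.
have e3 : (z2 * z1) * b = y2 * r by rewrite -mulrA h2.
rewrite (Qf_mul c Td Tr TZ e1) (Qf_mul c Td Tr TZ e2) (Qf_mul c Td Tr TZ e3).
by rewrite Qf_add_same // mulrDl.
Qed.

Lemma QmulDr : right_distributive Qmul Qadd.
Proof.
move=> x; have [t [a [Tt ->]]] := QfP x.
apply: Q_ind2 => d b c Td.
rewrite Qf_add_same //.
have [z [w [Tz h]]] := HTore a Td.
have Tzt : T (z * t) by apply: HTM.
rewrite (Qf_mul (b + c) Tt Td Tzt h) (Qf_mul b Tt Td Tzt h) (Qf_mul c Tt Td Tzt h).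
by rewrite Qf_add_same // mulrDr.
Qed.


Definition Qtype (_ : reg_ore_set Lside T) := Qt.

HB.instance Definition _ := gen_eqMixin (Qtype HT).
HB.instance Definition _ := gen_choiceMixin (Qtype HT).
Lemma Q1_neq0 : (Q1 : Qtype HT) != Q0.
Proof. by apply/eqP => /(Qf_same _ _ HT1) /eqP; rewrite oner_eq0. Qed.
HB.instance Definition _ := GRing.isZmodule.Build (Qtype HT) QaddA QaddC Qadd0 QaddN.
HB.instance Definition _ := GRing.Zmodule_isNzRing.Build (Qtype HT)
  QmulA Qmul1 Qmulr1 QmulDl QmulDr Q1_neq0.

Definition phi (a : A) : Qtype HT := Qf 1 a.

Lemma phi_nmod : nmod_morphism phi.
Proof.
split => // a b; rewrite /phi.
by rewrite -[LHS](@Qf_add_same 1 a b HT1).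
Qed.

Lemma phi_monoid : monoid_morphism phi.
Proof.
split => // a b; rewrite /phi.
have := @Qf_mul 1 a 1 b 1 a HT1 HT1; rewrite !mul1r mulr1 => h.
by rewrite -[LHS]h.
Qed.

HB.instance Definition _ := GRing.isNmodMorphism.Build A (Qtype HT) phi phi_nmod.
HB.instance Definition _ := GRing.isMonoidMorphism.Build A (Qtype HT) phi phi_monoid.

Lemma phi_frac : frac_ring Lside T phi.
Proof.
split; [|split].
- move=> t Tt; exists (Qf t 1 : Qtype HT); split.
    have := @Qf_mul 1 t t 1 1 1 HT1 Tt; rewrite !mul1r => h.
    by rewrite [LHS]h.
  have := @Qf_mul t 1 1 t 1 1 Tt HT1; rewrite !mul1r => h.
  rewrite [LHS]h //.
  have e := @Qf_scale 1 1 t t HT1 Tt (esym (mulr1 t)); rewrite mulr1 in e; exact: e.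
- move=> x; have [t [a [Tt ->]]] := QfP x; exists t, a; split => //.
  have := @Qf_mul 1 t t a 1 1 HT1 Tt; rewrite !mul1r => h.
  by rewrite [LHS]h.
- move=> a /= h; exists 1; split => //; rewrite mul1r.
  by apply/(@Qf_same 1 a 0 HT1).
Qed.

End OreLoc.


Section Univ.
Variables (A Q B : nzRingType) (T : A -> Prop) (HT : reg_ore_set Lside T).
Variables (phi : {rmorphism A -> Q}) (Hphi : frac_ring Lside T phi).
Variables (g : {rmorphism A -> B}) (Hg : inverts T g).
Let HTore : left_ore_cond T := proj2 (proj2 HT).
Let HTM : forall x y, T x -> T y -> T (x * y) := proj2 (proj2 (proj1 HT)).
Let Hrep : forall q : Q, exists t a, T t /\ phi t * q = phi a := proj1 (proj2 Hphi).
Let Hker : forall a, phi a = 0 -> exists t, T t /\ t * a = 0 := proj2 (proj2 Hphi).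

Definition ginv (t : A) : B :=
  match pselect (T t) with left H => projT1 (cid (Hg H)) | right _ => 0 end.

Lemma ginvP t : T t -> g t * ginv t = 1 /\ ginv t * g t = 1.
Proof. by move=> Tt; rewrite /ginv; case: pselect => // H; case: (cid _). Qed.

Lemma gcancl t x y : T t -> g t * x = g t * y -> x = y.
Proof.
move=> Tt e; have [_ h] := ginvP Tt.
by rewrite -[x]mul1r -[y]mul1r -h -!mulrA e.
Qed.

Lemma gcancr t x y : T t -> x * g t = y * g t -> x = y.
Proof.
move=> Tt e; have [h _] := ginvP Tt.
by rewrite -[x]mulr1 -[y]mulr1 -h !mulrA e.
Qed.

Definition qt (q : Q) := projT1 (cid (Hrep q)).
Definition qa (q : Q) := projT1 (cid (projT2 (cid (Hrep q)))).
Lemma qS q : T (qt q) /\ phi (qt q) * q = phi (qa q).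
Proof. rewrite /qa /qt; case: (cid (Hrep q)) => t h /=; case: (cid _) => x hx; exact: hx. Qed.

Definition hh_ (_ : reg_ore_set Lside T) (q : Q) : B := ginv (qt q) * g (qa q).
Definition hh := hh_ HT.

Lemma hrep q t a : T t -> phi t * q = phi a -> g t * hh q = g a.
Proof.
move=> Tt e; have [Tt0 e0] := qS q; rewrite /hh /hh_.
have [t2 [a2 [Tt2 e2]]] := HTore t Tt0.
have k : phi (t2 * a - a2 * qa q) = 0.
  by rewrite rmorphB !rmorphM -e -e0 !mulrA -!rmorphM e2 subrr.
have [w [Tw hw]] := Hker k.
have k2 : g (t2 * a) = g (a2 * qa q).
  apply/eqP; rewrite -subr_eq0 -rmorphB; apply/eqP.
  by apply: (@gcancl w) => //; rewrite -rmorphM hw rmorph0 mulr0.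
apply: (@gcancl t2) => //.
rewrite mulrA -rmorphM e2 rmorphM -!mulrA [g (qt q) * _]mulrA.
by rewrite (proj1 (ginvP Tt0)) mul1r -!rmorphM k2.
Qed.

Lemma hchar q t a x : T t -> phi t * q = phi a -> g t * x = g a -> hh q = x.
Proof. by move=> Tt e ex; apply: (@gcancl t) => //; rewrite ex (hrep Tt e). Qed.

Lemma hh_phi a : hh (phi a) = g a.
Proof.
apply: (@hchar _ 1 a); rewrite ?rmorph1 ?mul1r //.
exact: proj1 (proj1 HT).
Qed.

Lemma hh_nmod : nmod_morphism hh.
Proof.
split; first by rewrite -(rmorph0 phi) hh_phi rmorph0.
move=> x y; have [Tt ex] := qS x; have [Ts ey] := qS y.
set t := qt x in Tt ex *; set s := qt y in Ts ey *.
have [u [v [Tu huv]]] := HTore t Ts.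
have Tut : T (u * t) by apply: HTM.
apply: (@hchar _ (u * t) (u * qa x + v * qa y)) => //.
  rewrite mulrDr rmorphD; congr (_ + _); first by rewrite !rmorphM -mulrA ex.
  by rewrite huv !rmorphM -mulrA ey.
rewrite mulrDr rmorphD; congr (_ + _).
  by rewrite rmorphM -mulrA (hrep Tt ex) rmorphM.
by rewrite huv rmorphM -mulrA (hrep Ts ey) rmorphM.
Qed.

Lemma hh_monoid : monoid_morphism hh.
Proof.
split; first by rewrite -(rmorph1 phi) hh_phi rmorph1.
move=> x y; have [Tt ex] := qS x; have [Ts ey] := qS y.
set t := qt x in Tt ex *; set s := qt y in Ts ey *.
have [s' [a' [Ts' h]]] := HTore (qa x) Ts.
have Ts't : T (s' * t) by apply: HTM.
apply: (@hchar _ (s' * t) (a' * qa y)) => //.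
  by rewrite !rmorphM -!mulrA [phi t * _]mulrA ex mulrA -rmorphM h rmorphM -mulrA ey.
by rewrite !rmorphM -mulrA (mulrA (g t)) (hrep Tt ex) mulrA -rmorphM h rmorphM -mulrA (hrep Ts ey).
Qed.

HB.instance Definition _ := GRing.isNmodMorphism.Build Q B hh hh_nmod.
HB.instance Definition _ := GRing.isMonoidMorphism.Build Q B hh hh_monoid.

Lemma hh_unique (h' : {rmorphism Q -> B}) : (forall a, h' (phi a) = g a) ->
  forall x, h' x = hh x.
Proof.
move=> e x; have [Tt ex] := qS x; symmetry.
apply: (@hchar _ (qt x) (qa x)) => //.
by rewrite -!e -rmorphM ex.
Qed.
End Univ.

Lemma frac_univ_l (A Q : nzRingType) (T : A -> Prop) (phi : {rmorphism A -> Q}) :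
  reg_ore_set Lside T -> frac_ring Lside T phi ->
  forall (B : nzRingType) (g : {rmorphism A -> B}), inverts T g ->
    exists h : {rmorphism Q -> B},
      (forall r, h (phi r) = g r) /\
      (forall h' : {rmorphism Q -> B}, (forall r, h' (phi r) = g r) ->
         forall x, h' x = h x).
Proof.
move=> HT Hphi B g Hg.
exists (hh HT Hphi Hg); split; first exact: (hh_phi HT Hphi Hg).
exact: (hh_unique HT Hphi Hg).
Qed.


Section ConvA.
Variables (X Y : nzRingType) (f : {rmorphism X -> Y}).
Definition convA (x : X^c) : Y^c := f x.
Lemma convA_nmod : nmod_morphism convA.
Proof. by split => [|x y]; rewrite /convA ?rmorph0 ?rmorphD. Qed.
Lemma convA_monoid : monoid_morphism convA.
Proof. split => [|x y]; first exact: (rmorph1 f). exact: (rmorphM f y x). Qed.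
HB.instance Definition _ := GRing.isNmodMorphism.Build X^c Y^c convA convA_nmod.
HB.instance Definition _ := GRing.isMonoidMorphism.Build X^c Y^c convA convA_monoid.
End ConvA.

Section ConvB.
Variables (X Y : nzRingType) (f : {rmorphism X^c -> Y^c}).
Definition convB (x : X) : Y := f x.
Lemma convB_nmod : nmod_morphism convB.
Proof. by split => [|x y]; rewrite /convB ?rmorph0 ?rmorphD. Qed.
Lemma convB_monoid : monoid_morphism convB.
Proof. split => [|x y]; first exact: (rmorph1 f). exact: (rmorphM f y x). Qed.
HB.instance Definition _ := GRing.isNmodMorphism.Build X Y convB convB_nmod.
HB.instance Definition _ := GRing.isMonoidMorphism.Build X Y convB convB_monoid.
End ConvB.

Section ConvC.
Variables (X Y : nzRingType) (f : {rmorphism X^c -> Y}).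
Definition convC (x : X) : Y^c := f x.
Lemma convC_nmod : nmod_morphism convC.
Proof. by split => [|x y]; rewrite /convC ?rmorph0 ?rmorphD. Qed.
Lemma convC_monoid : monoid_morphism convC.
Proof. split => [|x y]; first exact: (rmorph1 f). exact: (rmorphM f y x). Qed.
HB.instance Definition _ := GRing.isNmodMorphism.Build X Y^c convC convC_nmod.
HB.instance Definition _ := GRing.isMonoidMorphism.Build X Y^c convC convC_monoid.
End ConvC.

Lemma is_unit_c (Y : nzRingType) (y : Y) : is_unit y -> is_unit (y : Y^c).
Proof. by move=> [z [h1 h2]]; exists z; split. Qed.
Lemma is_unit_uc (Y : nzRingType) (y : Y^c) : is_unit y -> is_unit (y : Y).
Proof. by move=> [z [h1 h2]]; exists z; split. Qed.

Lemma reg_ore_c (A : nzRingType) (T : A -> Prop) :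
  reg_ore_set Rside T -> reg_ore_set Lside (T : A^c -> Prop).
Proof.
move=> [[T1 [T0 TM]] [Treg Tore]].
have h1 : forall x y : A^c, T x -> T y -> T (x * y).
  by move=> x y Tx Ty; apply: (TM y x).
have h2 : forall t : A^c, T t -> regular t.
  by move=> t Tt; have [r1 r2] := Treg t Tt; split.
have h3 : left_ore_cond (T : A^c -> Prop).
  move=> a t Tt; have [t' [a' [Tt' e]]] := Tore a t Tt.
  by exists t', a'; split.
by split; [split; [|split]|split].
Qed.

Lemma ore_frac_l (A : nzRingType) (T : A -> Prop) : reg_ore_set Lside T ->
  exists (Q : nzRingType) (phi : {rmorphism A -> Q}), frac_ring Lside T phi.
Proof. by move=> HT; exists (Qtype HT), (phi HT); exact: phi_frac. Qed.

Lemma ore_frac_r (A : nzRingType) (T : A -> Prop) : reg_ore_set Rside T ->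
  exists (Q : nzRingType) (phi : {rmorphism A -> Q}), frac_ring Rside T phi.
Proof.
move=> /reg_ore_c HT; have [Q [f [f1 [f2 f3]]]] := ore_frac_l HT.
exists Q^c, (convC f); split; [|split].
- by move=> t Tt; apply: is_unit_c; apply: f1.
- by move=> q; have [t [a [Tt e]]] := f2 q; exists t, a.
- by move=> a e; have [t [Tt e']] := f3 a e; exists t.
Qed.

Lemma frac_univ_r (A Q : nzRingType) (T : A -> Prop) (phi : {rmorphism A -> Q}) :
  reg_ore_set Rside T -> frac_ring Rside T phi ->
  forall (B : nzRingType) (g : {rmorphism A -> B}), inverts T g ->
    exists h : {rmorphism Q -> B},
      (forall r, h (phi r) = g r) /\
      (forall h' : {rmorphism Q -> B}, (forall r, h' (phi r) = g r) ->
         forall x, h' x = h x).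
Proof.
move=> /reg_ore_c HT [f1 [f2 f3]] B g Hg.
have Hf : frac_ring Lside (T : A^c -> Prop) (convA phi : {rmorphism A^c -> Q^c}).
  split; [|split].
  - by move=> t Tt; apply: is_unit_c; apply: f1.
  - by move=> q; have [t [a [Tt e]]] := f2 q; exists t, a.
  - by move=> a e; have [t [Tt e']] := f3 a e; exists t.
have Hg' : inverts (T : A^c -> Prop) (convA g : {rmorphism A^c -> B^c}).
  by move=> t Tt; apply: is_unit_c; apply: Hg.
have [h [h1 h2]] := frac_univ_l HT Hf Hg'.
exists (convB h); split; first exact: h1.
move=> h' e x; exact: (h2 (convA h' : {rmorphism Q^c -> B^c}) e x).
Qed.

Lemma regularM (A : nzRingType) (x y : A) : regular x -> regular y -> regular (x * y).
Proof.
move=> [x1 x2] [y1 y2]; split => z.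
  by rewrite -mulrA => /x1 /y1.
by rewrite mulrA => /y2 /x2.
Qed.

Lemma not_regular0 (A : nzRingType) : ~ regular (0 : A).
Proof.
move=> [h _]; have h10 := h 1 (mul0r 1).
by move: (oner_neq0 A); rewrite h10 eqxx.
Qed.

Lemma not_unit0 (A : nzRingType) : ~ is_unit (0 : A).
Proof.
move=> [y [h _]]; move: h; rewrite mul0r => h10.
by move: (oner_neq0 A); rewrite -h10 eqxx.
Qed.

Lemma unit_cancel (A : nzRingType) (x z : A) : is_unit x -> x * z = 0 -> z = 0.
Proof. by move=> [y [h1 h2]] e; rewrite -[z]mul1r -h2 -mulrA e mulr0. Qed.

Lemma unit_cancel_r (A : nzRingType) (x z : A) : is_unit x -> z * x = 0 -> z = 0.
Proof. by move=> [y [h1 h2]] e; rewrite -[z]mulr1 -h1 mulrA e mul0r. Qed.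

Lemma unitM (A : nzRingType) (x y : A) : is_unit x -> is_unit y -> is_unit (x * y).
Proof.
move=> [x' [x1 x2]] [y' [y1 y2]]; exists (y' * x'); split.
  by rewrite mulrA -[x * y * y']mulrA y1 mulr1 x1.
by rewrite mulrA -[y' * x' * x]mulrA x2 mulr1 y2.
Qed.

Section Gen.
Variables (A : nzRingType) (T1 T2 : A -> Prop).
Inductive gen : A -> Prop :=
| gen1 x : T1 x -> gen x
| gen2 x : T2 x -> gen x
| genM x y : gen x -> gen y -> gen (x * y).

Lemma gen_left : left_ore_cond T1 -> left_ore_cond T2 -> left_ore_cond gen.
Proof.
move=> o1 o2 a t Ht; elim: Ht a => [x Tx|x Tx|x y _ IHx _ IHy] a.
- by have [t' [a' [Tt' e]]] := o1 a x Tx; exists t', a'; split => //; apply: gen1.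
- by have [t' [a' [Tt' e]]] := o2 a x Tx; exists t', a'; split => //; apply: gen2.
- have [t1 [a1 [g1 e1]]] := IHy a; have [t2 [a2 [g2 e2]]] := IHx a1.
  exists (t2 * t1), a2; split; first exact: genM.
  by rewrite -mulrA e1 mulrA e2 mulrA.
Qed.

Lemma gen_right : right_ore_cond T1 -> right_ore_cond T2 -> right_ore_cond gen.
Proof.
move=> o1 o2 a t Ht; elim: Ht a => [x Tx|x Tx|x y _ IHx _ IHy] a.
- by have [t' [a' [Tt' e]]] := o1 a x Tx; exists t', a'; split => //; apply: gen1.
- by have [t' [a' [Tt' e]]] := o2 a x Tx; exists t', a'; split => //; apply: gen2.
- have [t1 [a1 [g1 e1]]] := IHx a; have [t2 [a2 [g2 e2]]] := IHy a1.
  exists (t1 * t2), a2; split; first exact: genM.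
  by rewrite mulrA e1 -mulrA e2 mulrA.
Qed.

Lemma gen_reg st : reg_ore_set st T1 -> reg_ore_set st T2 -> reg_ore_set st gen.
Proof.
move=> [[a1 [b1 c1]] [r1 o1]] [[a2 [b2 c2]] [r2 o2]].
have greg : forall t, gen t -> regular t.
  move=> t; elim => [x /r1|x /r2|x y _ hx _ hy] //; exact: regularM.
split; [split; [exact: gen1|split]|split] => //.
- by move/greg/not_regular0.
- exact: genM.
case: st o1 o2 => /= o1 o2.
- exact: gen_left.
- exact: gen_right.
- by split; [apply: gen_left; [exact: (proj1 o1)|exact: (proj1 o2)]
            |apply: gen_right; [exact: (proj2 o1)|exact: (proj2 o2)]].
Qed.
End Gen.

Lemma ore_lift_l (A : nzRingType) st :
  (forall T : A -> Prop, reg_ore_set st T -> left_ore_cond T) -> left_ore_cond (@Smax A st).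
Proof.
move=> H a t [T [HT Tt]]; have [t' [a' [Tt' e]]] := H T HT a t Tt.
by exists t', a'; split => //; exists T.
Qed.

Lemma ore_lift_r (A : nzRingType) st :
  (forall T : A -> Prop, reg_ore_set st T -> right_ore_cond T) -> right_ore_cond (@Smax A st).
Proof.
move=> H a t [T [HT Tt]]; have [t' [a' [Tt' e]]] := H T HT a t Tt.
by exists t', a'; split => //; exists T.
Qed.

Lemma Smax_reg st (A : nzRingType) : reg_ore_set st (@Smax A st).
Proof.
have one : @reg_ore_set A st (fun x : A => x = 1).
  have h1 : @left_ore_cond A (fun x : A => x = 1).
    by move=> a t ->; exists 1, a; rewrite mul1r mulr1.
  have h2 : @right_ore_cond A (fun x : A => x = 1).
    by move=> a t ->; exists 1, a; rewrite mul1r mulr1.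
  split; [split; [|split]|split] => //.
  - by move=> e; move: (oner_neq0 A); rewrite e eqxx.
  - by move=> x y -> ->; rewrite mulr1.
  - by move=> t ->; split => y; rewrite ?mul1r ?mulr1.
  - by case: st.
split; [split; [|split]|split].
- by exists (fun x => x = 1).
- by move=> [T [[_ [Treg _]] T0]]; apply: (@not_regular0 A); apply: Treg.
- move=> x y [T1 [H1 x1]] [T2 [H2 y2]]; exists (gen T1 T2); split.
    exact: gen_reg.
  by apply: genM; [apply: gen1|apply: gen2].
- by move=> t [T [[_ [Treg _]] Tt]]; apply: Treg.
case: st one => /= _.
- by apply: ore_lift_l => T [_ [_ o]].
- by apply: ore_lift_r => T [_ [_ o]].
- split; first by apply: ore_lift_l => T [_ [_ [o _]]].
  by apply: ore_lift_r => T [_ [_ [_ o]]].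
Qed.

Lemma reg_ore_B_L (A : nzRingType) (T : A -> Prop) :
  reg_ore_set Bside T -> reg_ore_set Lside T.
Proof. by move=> [h1 [h2 [h3 _]]]; split. Qed.

Lemma frac_univ st (A Q : nzRingType) (T : A -> Prop) (phi : {rmorphism A -> Q}) :
  reg_ore_set st T -> frac_ring st T phi ->
  forall (B : nzRingType) (g : {rmorphism A -> B}), inverts T g ->
    exists h : {rmorphism Q -> B},
      (forall r, h (phi r) = g r) /\
      (forall h' : {rmorphism Q -> B}, (forall r, h' (phi r) = g r) ->
         forall x, h' x = h x).
Proof.
case: st => HT Hphi.
- exact: frac_univ_l.
- exact: frac_univ_r.
- exact: (frac_univ_l (reg_ore_B_L HT) Hphi).
Qed.

Lemma frac_exists st (A : nzRingType) (T : A -> Prop) : reg_ore_set st T ->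
  exists (Q : nzRingType) (phi : {rmorphism A -> Q}), frac_ring st T phi.
Proof.
case: st => HT.
- exact: ore_frac_l.
- exact: ore_frac_r.
- exact: (ore_frac_l (reg_ore_B_L HT)).
Qed.

Lemma univ_loc_ker (R A : nzRingType) (S : R -> Prop) (sig : {rmorphism R -> A}) :
  univ_loc S sig -> forall r, sig r = 0 <-> ass S r.
Proof.
move=> [Hi Hu] r; split.
  move=> e B g Hg; have [h [h1 _]] := Hu B g Hg.
  by rewrite -h1 e rmorph0.
by move=> /(_ A sig Hi).
Qed.

Lemma left_to_right_fracs (A Q : nzRingType) (T : A -> Prop) (phi : {rmorphism A -> Q}) :
  inverts T phi -> right_ore_cond T ->
  (forall q, exists t a, T t /\ phi t * q = phi a) ->
  forall q, exists t b, T t /\ q * phi t = phi b.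
Proof.
move=> Hi Hr Hl q; have [t [a [Tt e]]] := Hl q.
have [y [h1 h2]] := Hi t Tt.
have eq : q = y * phi a by rewrite -e mulrA h2 mul1r.
have [t' [a' [Tt' e']]] := Hr a t Tt.
exists t', a'; split => //.
by rewrite eq -mulrA -rmorphM e' rmorphM mulrA h2 mul1r.
Qed.

Lemma units_Smax st (A Q : nzRingType) (T : A -> Prop) (phi : {rmorphism A -> Q}) :
  inverts T phi -> (forall x, phi x = 0 -> x = 0) ->
  (st <> Rside -> forall q, exists t b, T t /\ phi t * q = phi b) ->
  (st <> Lside -> forall q, exists t b, T t /\ q * phi t = phi b) ->
  forall x, is_unit (phi x) -> Smax st x.
Proof.
move=> Hi Hinj Hl Hr x ux.
pose S' := fun x => is_unit (phi x).
have hl : st <> Rside -> left_ore_cond S'.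
  move=> hst a t [y [h1 h2]]; have [t' [b [Tt' e]]] := Hl hst (phi a * y).
  exists t', b; split; first exact: Hi.
  apply/eqP; rewrite -subr_eq0; apply/eqP; apply: Hinj.
  by rewrite rmorphB !rmorphM -e -!mulrA h2 mulr1 subrr.
have hr : st <> Lside -> right_ore_cond S'.
  move=> hst a t [y [h1 h2]]; have [t' [b [Tt' e]]] := Hr hst (y * phi a).
  exists t', b; split; first exact: Hi.
  apply/eqP; rewrite -subr_eq0; apply/eqP; apply: Hinj.
  rewrite rmorphB !rmorphM -e !mulrA h1 mul1r subrr //.
have base : mult_set S' /\ (forall t, S' t -> regular t).
  split; [split; [|split]|].
  - by exists 1; rewrite rmorph1 mul1r.
  - by rewrite /S' rmorph0; apply: not_unit0.
  - by move=> u v hu hv; rewrite /S' rmorphM; apply: unitM.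
  - move=> t ut; split => z e; apply: Hinj.
      by apply: (unit_cancel ut); rewrite -rmorphM e rmorph0.
    by apply: (unit_cancel_r ut); rewrite -rmorphM e rmorph0.
exists S'; split => //; split; [exact: (proj1 base)|split; [exact: (proj2 base)|]].
case: st Hl Hr hl hr => /= Hl Hr hl hr.
- exact: hl.
- exact: hr.
- by split; [exact: hl|exact: hr].
Qed.

Lemma rmorph_unit (A B : nzRingType) (f : {rmorphism A -> B}) x :
  is_unit x -> is_unit (f x).
Proof. by move=> [y [h1 h2]]; exists (f y); rewrite -!rmorphM h1 h2 rmorph1. Qed.

Section L2.
Variables (R Rb : nzRingType) (pi : {rmorphism R -> Rb}).
Hypothesis surj : forall y, exists r, pi r = y.
Variables (aa : R -> Prop) (S : R -> Prop).
Hypothesis pker : forall r, pi r = 0 <-> aa r.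
Hypothesis Hass : forall r, ass S r <-> aa r.

Definition Tim (y : Rb) := exists s, S s /\ pi s = y.

Lemma sig_ker (A : nzRingType) (sig : {rmorphism R -> A}) :
  univ_loc S sig -> forall r, sig r = 0 <-> pi r = 0.
Proof.
move=> U r; rewrite (univ_loc_ker U) Hass pker; split => //.
Qed.

Lemma Tim_base (A : nzRingType) (sig : {rmorphism R -> A}) :
  mult_set S -> univ_loc S sig -> mult_set Tim /\ (forall t, Tim t -> regular t).
Proof.
move=> [S1 [S0 SM]] U; have Hi := proj1 U.
split; [split; [|split]|].
- by exists 1; rewrite rmorph1.
- move=> [s [Ss e]]; have := Hi s Ss.
  by have /(sig_ker U) -> := e; apply: not_unit0.
- by move=> x y [s [Ss <-]] [s' [Ss' <-]]; exists (s * s'); rewrite rmorphM; split => //; apply: SM.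
- move=> t [s [Ss <-]]; split => z; have [r <-] := surj z; rewrite -rmorphM => e;
    apply/(sig_ker U); move/(sig_ker U): e; rewrite rmorphM.
    exact: unit_cancel (Hi s Ss).
  exact: unit_cancel_r (Hi s Ss).
Qed.

Lemma Tim_left (A : nzRingType) (sig : {rmorphism R -> A}) :
  univ_loc S sig -> (forall q, exists s r, S s /\ sig s * q = sig r) -> left_ore_cond Tim.
Proof.
move=> U L y t [s [Ss <-]]; have [r <-] := surj y.
have [z [h1 h2]] := proj1 U s Ss.
have [s1 [r1 [Ss1 e]]] := L (sig r * z).
exists (pi s1), (pi r1); split; first by exists s1.
apply/eqP; rewrite -subr_eq0 -!rmorphM -rmorphB; apply/eqP; apply/(sig_ker U).
by rewrite rmorphB !rmorphM -e -!mulrA h2 mulr1 subrr.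
Qed.

Lemma Tim_right (A : nzRingType) (sig : {rmorphism R -> A}) :
  univ_loc S sig -> (forall q, exists s r, S s /\ q * sig s = sig r) -> right_ore_cond Tim.
Proof.
move=> U L y t [s [Ss <-]]; have [r <-] := surj y.
have [z [h1 h2]] := proj1 U s Ss.
have [s1 [r1 [Ss1 e]]] := L (z * sig r).
exists (pi s1), (pi r1); split; first by exists s1.
apply/eqP; rewrite -subr_eq0 -!rmorphM -rmorphB; apply/eqP; apply/(sig_ker U).
by rewrite rmorphB !rmorphM -e !mulrA h1 mul1r subrr.
Qed.

Lemma L2 st : localizable st S -> forall s, S s -> Smax st (pi s).
Proof.
move=> [HS H] s Ss; exists Tim; split; last by exists s.
case: st H => /= H.
- have [A [sig [U L]]] := H; have [b1 b2] := Tim_base HS U.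
  by split; [|split] => //; apply: Tim_left L.
- have [A [sig [U L]]] := H; have [b1 b2] := Tim_base HS U.
  by split; [|split] => //; apply: Tim_right L.
- have [[A [sig [U L]]] [A' [sig' [U' L']]]] := H; have [b1 b2] := Tim_base HS U.
  by split; [|split; [|split]] => //; [apply: Tim_left L|apply: Tim_right L'].
Qed.
End L2.

Section Fact.
Variables (R Rb B : nzRingType) (pi : {rmorphism R -> Rb}).
Hypothesis surj : forall y, exists r, pi r = y.
Variables (g : {rmorphism R -> B}).
Hypothesis kill : forall r, pi r = 0 -> g r = 0.

Definition pre (y : Rb) : R := projT1 (cid (surj y)).
Lemma pre_spec y : pi (pre y) = y.
Proof. by rewrite /pre; case: (cid _). Qed.

Lemma gwd r r' : pi r = pi r' -> g r = g r'.
Proof.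
move=> e; apply/eqP; rewrite -subr_eq0 -rmorphB; apply/eqP; apply: kill.
by rewrite rmorphB e subrr.
Qed.

Definition gbar_ (_ : forall r, pi r = 0 -> g r = 0) (y : Rb) : B := g (pre y).
Definition gbar := gbar_ kill.

Lemma gbar_pi r : gbar (pi r) = g r.
Proof. by apply: gwd; rewrite pre_spec. Qed.

Lemma gbar_nmod : nmod_morphism gbar.
Proof.
split; first by rewrite -(rmorph0 pi) gbar_pi rmorph0.
move=> y1 y2; have [r1 <-] := surj y1; have [r2 <-] := surj y2.
by rewrite -rmorphD !gbar_pi rmorphD.
Qed.

Lemma gbar_monoid : monoid_morphism gbar.
Proof.
split; first by rewrite -(rmorph1 pi) gbar_pi rmorph1.
move=> y1 y2; have [r1 <-] := surj y1; have [r2 <-] := surj y2.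
by rewrite -rmorphM !gbar_pi rmorphM.
Qed.

HB.instance Definition _ := GRing.isNmodMorphism.Build Rb B gbar gbar_nmod.
HB.instance Definition _ := GRing.isMonoidMorphism.Build Rb B gbar gbar_monoid.
End Fact.

Lemma frac_inj st (A Q : nzRingType) (T : A -> Prop) (phi : {rmorphism A -> Q}) :
  (forall t, T t -> regular t) -> frac_ring st T phi -> forall y, phi y = 0 -> y = 0.
Proof.
move=> Hreg [_ H] y e; case: st H => /= [[_ H]|[_ H]|[_ H]];
  have [t [Tt h]] := H y e; have [r1 r2] := Hreg t Tt; by [apply: r1 | apply: r2].
Qed.

Lemma frac_left st (A Q : nzRingType) (T : A -> Prop) (phi : {rmorphism A -> Q}) :
  st <> Rside -> frac_ring st T phi -> forall q, exists t a, T t /\ phi t * q = phi a.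
Proof. by case: st => // _ [_ [H _]]. Qed.

Lemma frac_right st (A Q : nzRingType) (T : A -> Prop) (phi : {rmorphism A -> Q}) :
  st <> Lside -> reg_ore_set st T -> frac_ring st T phi ->
  forall q, exists t a, T t /\ q * phi t = phi a.
Proof.
case: st => // _.
  by move=> _ [_ [H _]].
move=> [_ [_ [_ Hr]]] [Hi [Hl _]]; exact: left_to_right_fracs.
Qed.

Unset Implicit Arguments.
Set Strict Implicit.

Theorem theorem2p8 (R : nzRingType) (st : side) (a : R -> Prop)
  (ha : in_ass_L st a)
  (Rb : nzRingType) (pi : {rmorphism R -> Rb})
  (pi_surj : forall y : Rb, exists r : R, pi r = y)
  (pi_ker : forall r : R, pi r = 0 <-> a r) :
  (* (1) T_{*,a}(R) = pi^{-1}(S_*(Rbar)) *)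
  (forall r : R, Tmax st a r <-> Smax st (pi r)) /\
  (* Q_{*,a}(R) = R<T^{-1}> and Q_*(Rbar) exist *)
  (exists (A : nzRingType) (sigma : {rmorphism R -> A}), univ_loc (Tmax st a) sigma) /\
  (exists (Qb : nzRingType) (phi : {rmorphism Rb -> Qb}), frac_ring st (Smax st) phi) /\
  (forall (A : nzRingType) (sigma : {rmorphism R -> A}), univ_loc (Tmax st a) sigma ->
   forall (Qb : nzRingType) (phi : {rmorphism Rb -> Qb}), frac_ring st (Smax st) phi ->
     (* (2) R-isomorphism Q_{*,a}(R) ~ Q_*(Rbar) *)
     (exists h : {rmorphism A -> Qb}, bijective h /\ forall r, h (sigma r) = phi (pi r)) /\
     (* (3) T = sigma^{-1}(Q_{*,a}(R)^x) = sigma^{-1}(Q_*(Rbar)^x) *)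
     (forall r, Tmax st a r <-> is_unit (sigma r)) /\
     (forall r, Tmax st a r <-> is_unit (phi (pi r)))).
Proof.
have [S [HS Hass]] := ha.
have HSmr : reg_ore_set st (@Smax Rb st) := Smax_reg st Rb.
have Hreg : forall t, Smax st t -> regular t := proj1 (proj2 HSmr).
have HL2 : forall S', loc_ass st a S' -> forall s, S' s -> Smax st (pi s).
  by move=> S' [H1 H2]; apply: (L2 pi_surj pi_ker H2).
have K : forall (Qb : nzRingType) (phi : {rmorphism Rb -> Qb}),
    frac_ring st (Smax st) phi ->
    univ_loc (fun r => Smax st (pi r)) (phi \o pi : {rmorphism R -> Qb}).
  move=> Qb phi Hphi; split.
    by move=> r Hr; exact: (proj1 Hphi (pi r) Hr).
  move=> B g Hg.
  have gS : inverts S g by move=> s Ss; apply: Hg; apply: (HL2 S (conj HS Hass)).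
  have kill : forall r, pi r = 0 -> g r = 0.
    by move=> r /pi_ker /Hass /(_ B g gS).
  have gbS : inverts (Smax st) (gbar pi_surj kill).
    move=> y Hy; have [r er] := pi_surj y; subst y.
    move: (Hg r Hy); rewrite -(gbar_pi pi_surj kill) => H; exact: H.
  have [h [h1 h2]] := frac_univ HSmr Hphi gbS.
  exists h; split.
    by move=> r /=; rewrite h1; apply: gbar_pi.
  move=> h' e x; apply: h2 => y; have [r <-] := pi_surj y.
  rewrite (e r); symmetry; apply: gbar_pi.
have [Qb0 [phi0 Hphi0]] := frac_exists HSmr.
have Tm : forall r, Tmax st a r <-> Smax st (pi r).
  move=> r; split; first by move=> [S' [HS' S'r]]; apply: (HL2 S' HS').
  move=> Hr; exists (fun r => Smax st (pi r)); split => //; split.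
    split.
      have [[h1 [h0 hM]] _] := HSmr.
      split; [|split]; rewrite ?rmorph1 ?rmorph0 //.
      by move=> x y hx hy; rewrite rmorphM; apply: hM.
    have LL : st <> Rside -> left_loc (fun r => Smax st (pi r)).
      move=> hst; exists Qb0, (phi0 \o pi); split; first exact: K.
      move=> q; have [t [b [Tt e]]] := frac_left hst Hphi0 q.
      have [s es] := pi_surj t; have [r' er] := pi_surj b.
      by exists s, r'; rewrite /= es er.
    have RL : st <> Lside -> right_loc (fun r => Smax st (pi r)).
      move=> hst; exists Qb0, (phi0 \o pi); split; first exact: K.
      move=> q; have [t [b [Tt e]]] := frac_right hst HSmr Hphi0 q.
      have [s es] := pi_surj t; have [r' er] := pi_surj b.
      by exists s, r'; rewrite /= es er.
    destruct st; simpl.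
    - by apply: LL.
    - by apply: RL.
    - by split; [apply: LL|apply: RL].
  move=> r'; split.
    move=> /(_ Qb0 (phi0 \o pi) (proj1 (K Qb0 phi0 Hphi0))) /= e.
    by apply/pi_ker; apply: (frac_inj Hreg Hphi0).
  move=> ar B g Hg; apply: (proj2 (Hass r') ar).
  by move=> s Ss; apply: Hg; apply: (HL2 S (conj HS Hass)).
have TmE : Tmax st a = (fun r => Smax st (pi r)).
  by apply: funext => r; apply: propext; apply: Tm.
have Units : forall (Qb : nzRingType) (phi : {rmorphism Rb -> Qb}),
    frac_ring st (Smax st) phi -> forall y, is_unit (phi y) -> Smax st y.
  move=> Qb phi Hphi; apply: (units_Smax (proj1 Hphi) (frac_inj Hreg Hphi)).
    by move=> hst; apply: frac_left hst Hphi.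
  by move=> hst; apply: frac_right hst HSmr Hphi.
split; first exact: Tm.
split; first by exists Qb0, (phi0 \o pi); rewrite TmE; apply: K.
split; first by exists Qb0, phi0.
move=> A sigma Hsig Qb phi Hphi; rewrite TmE in Hsig *.
have Kp := K Qb phi Hphi.
have [h [h1 h2]] := proj2 Hsig Qb (phi \o pi) (proj1 Kp).
have [k [k1 k2]] := proj2 Kp A sigma (proj1 Hsig).
have kh : forall x, k (h x) = x.
  have [i [i1 i2]] := proj2 Hsig A sigma (proj1 Hsig).
  move=> x; rewrite -[k (h x)]/((k \o h) x) (i2 (k \o h)).
    by rewrite -[x in RHS]/(idfun x) (i2 idfun).
  by move=> r /=; rewrite h1 k1.
have hk : forall y, h (k y) = y.
  have [i [i1 i2]] := proj2 Kp Qb (phi \o pi) (proj1 Kp).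
  move=> y; rewrite -[h (k y)]/((h \o k) y) (i2 (h \o k)).
    by rewrite -[y in RHS]/(idfun y) (i2 idfun).
  by move=> r /=; rewrite k1 h1.
split.
  exists h; split; first by exists k.
  by move=> r; rewrite h1.
split => r; split.
- by move=> Hr; apply: (proj1 Hsig).
- move=> /(rmorph_unit h); rewrite h1 /=; exact: Units.
- by move=> Hr; apply: (proj1 Hphi).
- exact: Units.
Qed.
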